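(* (i) There exists a zero-dimensional locally compact metrizable abelian group in which every element $x$ satisfies $2x=0$ and which is not $g$-reversible. (ii) There exists a locally connected locally compact metrizable abelian group which is not $g$-reversible.
   Context: All topological groups are assumed Hausdorff. A topological group $G$ is called $g$-reversible if every continuous automorphism of $G$ (i.e. every continuous group isomorphism of $G$ onto itself) is an open map. *)

(* Defs.v *)
From Stdlib Require Import Reals List Classical.
Open Scope R_scope.

Record TopAbGroup := {
  carrier :> Type;
  add : carrier -> carrier -> carrier;
  zero : carrier;
  opp : carrier -> carrier;
  addA : forall x y z, add x (add y z) = add (add x y) z;
  addC : forall x y, add x y = add y x;
  add0 : forall x, add zero x = x;
  addN : forall x, add (opp x) x = zero;
  is_open : (carrier -> Prop) -> Prop;
  open_full : is_open (fun _ => True);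
  open_inter : forall U V, is_open U -> is_open V -> is_open (fun x => U x /\ V x);
  open_union : forall F : (carrier -> Prop) -> Prop,
      (forall U, F U -> is_open U) -> is_open (fun x => exists U, F U /\ U x);
  add_cont : forall W x y, is_open W -> W (add x y) ->
      exists U V, is_open U /\ is_open V /\ U x /\ V y /\
        (forall a b, U a -> V b -> W (add a b));
  opp_cont : forall W, is_open W -> is_open (fun x => W (opp x));
  hausdorff : forall x y, x <> y ->
      exists U V, is_open U /\ is_open V /\ U x /\ V y /\
        (forall z, U z -> V z -> False)
}.

Arguments add {_}. Arguments zero {_}. Arguments opp {_}. Arguments is_open {_}.

Section Top.
Variable G : TopAbGroup.

Definition is_closed (A : G -> Prop) : Prop := is_open (fun x => ~ A x).

Definition compact (K : G -> Prop) : Prop :=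
  forall F : (G -> Prop) -> Prop,
    (forall U, F U -> is_open U) ->
    (forall x, K x -> exists U, F U /\ U x) ->
    exists l : list (G -> Prop),
      (forall U, In U l -> F U) /\ (forall x, K x -> exists U, In U l /\ U x).

Definition locally_compact : Prop :=
  forall x : G, exists U K, is_open U /\ U x /\ compact K /\ (forall y, U y -> K y).

Definition metrizable : Prop :=
  exists d : G -> G -> R,
    (forall x y, 0 <= d x y) /\
    (forall x y, d x y = 0 <-> x = y) /\
    (forall x y, d x y = d y x) /\
    (forall x y z, d x z <= d x y + d y z) /\
    (forall U : G -> Prop, is_open U <->
       (forall x, U x -> exists eps, 0 < eps /\ forall y, d x y < eps -> U y)).

Definition zero_dimensional : Prop :=
  forall (U : G -> Prop) (x : G), is_open U -> U x ->
    exists V, is_open V /\ is_closed V /\ V x /\ (forall y, V y -> U y).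

Definition connected (C : G -> Prop) : Prop :=
  ~ exists A B : G -> Prop, is_open A /\ is_open B /\
      (forall x, C x -> A x \/ B x) /\
      (exists x, C x /\ A x) /\ (exists x, C x /\ B x) /\
      (forall x, C x -> A x -> B x -> False).

Definition locally_connected : Prop :=
  forall (U : G -> Prop) (x : G), is_open U -> U x ->
    exists V, is_open V /\ connected V /\ V x /\ (forall y, V y -> U y).

Definition continuous (f : G -> G) : Prop :=
  forall U, is_open U -> is_open (fun x => U (f x)).

Definition open_map (f : G -> G) : Prop :=
  forall U, is_open U -> is_open (fun y => exists x, U x /\ f x = y).

Definition cont_automorphism (f : G -> G) : Prop :=
  (forall x y, f (add x y) = add (f x) (f y)) /\
  (forall x y, f x = f y -> x = y) /\
  (forall y, exists x, f x = y) /\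
  continuous f.

Definition g_reversible : Prop :=
  forall f : G -> G, cont_automorphism f -> open_map f.

End Top.

(* Main.v *)
Require Import Defs.
From Stdlib Require Import Reals List Classical Lra ClassicalEpsilon FunctionalExtensionality Arith Lia Bool ProofIrrelevance.
Open Scope R_scope.


Record MK := {
  kT :> Type;
  kadd : kT -> kT -> kT;
  k0 : kT;
  kopp : kT -> kT;
  kaddA : forall x y z, kadd x (kadd y z) = kadd (kadd x y) z;
  kaddC : forall x y, kadd x y = kadd y x;
  kadd0 : forall x, kadd k0 x = x;
  kaddN : forall x, kadd (kopp x) x = k0;
  dK : kT -> kT -> R;
  dK_ge0 : forall x y, 0 <= dK x y;
  dK_le1 : forall x y, dK x y <= 1;
  dK_eq0 : forall x y, dK x y = 0 <-> x = y;
  dK_sym : forall x y, dK x y = dK y x;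
  dK_tri : forall x y z, dK x z <= dK x y + dK y z;
  dK_inv : forall x y a, dK (kadd x a) (kadd y a) = dK x y;
  k1 : kT;
  k1_ne : k1 <> k0
}.

Lemma hp_pos n : 0 < (/2)^n.
Proof. apply pow_lt; lra. Qed.
Lemma hp_le1 n : (/2)^n <= 1.
Proof. induction n; simpl; [lra|]. pose proof (hp_pos n); lra. Qed.
Lemma hp_S n : (/2)^(S n) = /2 * (/2)^n.
Proof. reflexivity. Qed.
Lemma hp_mono n m : (n <= m)%nat -> (/2)^m <= (/2)^n.
Proof. induction 1; [lra|]. rewrite hp_S. pose proof (hp_pos m); lra. Qed.
Lemma hp_small eps : 0 < eps -> exists n, (/2)^n < eps.
Proof.
  intros He. destruct (pow_lt_1_zero (/2)) with (y:=eps) as [N HN].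
  rewrite Rabs_pos_eq; lra. auto.
  exists N. specialize (HN N (le_n N)). rewrite Rabs_pos_eq in HN; auto.
  left; apply hp_pos.
Qed.

Section DK.
Variable K : MK.
Definition Seq := nat -> K.

Definition terms (t s : Seq) (r : R) : Prop := exists n, r = dK K (t n) (s n) * (/2)^n.
Lemma terms_bnd t s : bound (terms t s).
Proof. exists 1. intros r [n ->]. pose proof (dK_le1 K (t n) (s n)).
  pose proof (dK_ge0 K (t n) (s n)). pose proof (hp_le1 n). pose proof (hp_pos n).
  apply Rle_trans with (1*1); [|lra]. apply Rmult_le_compat; lra. Qed.
Lemma terms_ne t s : exists r, terms t s r.
Proof. eexists; exists 0%nat; reflexivity. Qed.
Definition D (t s : Seq) : R := proj1_sig (completeness _ (terms_bnd t s) (terms_ne t s)).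

Lemma D_ge t s n : dK K (t n) (s n) * (/2)^n <= D t s.
Proof. unfold D. destruct completeness as [m [H1 H2]]. simpl. apply H1. exists n; auto. Qed.
Lemma D_le t s c : (forall n, dK K (t n) (s n) * (/2)^n <= c) -> D t s <= c.
Proof. intros H. unfold D. destruct completeness as [m [H1 H2]]. simpl. apply H2.
  intros r [n ->]. auto. Qed.
Lemma term_ge0 t s n : 0 <= dK K (t n) (s n) * (/2)^n.
Proof. pose proof (dK_ge0 K (t n) (s n)); pose proof (hp_pos n); nra. Qed.
Lemma D_ge0 t s : 0 <= D t s.
Proof. eapply Rle_trans; [apply (term_ge0 t s 0)|apply D_ge]. Qed.
Lemma D_le1 t s : D t s <= 1.
Proof. apply D_le. intros n. pose proof (dK_le1 K (t n) (s n)).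
  pose proof (dK_ge0 K (t n) (s n)). pose proof (hp_le1 n). pose proof (hp_pos n). nra. Qed.
Lemma D_sym t s : D t s = D s t.
Proof. apply Rle_antisym; apply D_le; intros n; rewrite dK_sym; apply D_ge. Qed.
Lemma D_tri t s u : D t u <= D t s + D s u.
Proof. apply D_le. intros n. pose proof (D_ge t s n). pose proof (D_ge s u n).
  pose proof (dK_tri K (t n) (s n) (u n)). pose proof (hp_pos n). nra. Qed.
Lemma D_eq0 t s : D t s = 0 <-> t = s.
Proof. split.
  - intros H. extensionality n. apply (dK_eq0 K). pose proof (D_ge t s n).
    pose proof (dK_ge0 K (t n) (s n)). pose proof (hp_pos n). rewrite H in H0.
    destruct H1; [|auto]. nra.
  - intros ->. apply Rle_antisym; [|apply D_ge0]. apply D_le. intros n.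
    replace (dK K (s n) (s n)) with 0 by (symmetry; apply (dK_eq0 K); auto). lra.
Qed.
Definition sadd (t s : Seq) : Seq := fun n => kadd K (t n) (s n).
Lemma D_inv t s a : D (sadd t a) (sadd s a) = D t s.
Proof. apply Rle_antisym; apply D_le; intros n; unfold sadd.
  rewrite dK_inv; apply D_ge. rewrite <- (dK_inv K _ _ (a n)); apply (D_ge (sadd t a) (sadd s a) n). Qed.
End DK.

Section GK.
Variable K : MK.
Definition Car := (Seq K * Seq K)%type.
Definition dl (u v : Seq K) : R := if excluded_middle_informative (u = v) then 0 else 1.
Definition dG (x y : Car) : R := dl (fst x) (fst y) + D K (snd x) (snd y).
Definition gopen (U : Car -> Prop) : Prop :=
  forall x, U x -> exists eps, 0 < eps /\ forall y, dG x y < eps -> U y.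
Definition gadd (x y : Car) : Car := (sadd K (fst x) (fst y), sadd K (snd x) (snd y)).
Definition gzero : Car := (fun _ => k0 K, fun _ => k0 K).
Definition sopp (t : Seq K) : Seq K := fun n => kopp K (t n).
Definition gopp (x : Car) : Car := (sopp (fst x), sopp (snd x)).

Lemma dl_ge0 u v : 0 <= dl u v.
Proof. unfold dl; destruct excluded_middle_informative; lra. Qed.
Lemma dl_lt1 u v : dl u v < 1 -> u = v.
Proof. unfold dl; destruct excluded_middle_informative; auto; lra. Qed.
Lemma dl_same u : dl u u = 0.
Proof. unfold dl; destruct excluded_middle_informative; tauto. Qed.
Lemma dl_sym u v : dl u v = dl v u.
Proof. unfold dl; do 2 destruct excluded_middle_informative; subst; auto; congruence. Qed.
Lemma dl_tri u v w : dl u w <= dl u v + dl v w.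
Proof. unfold dl; do 3 destruct excluded_middle_informative; subst; try lra; congruence. Qed.
Lemma dl_inv t s a : dl (sadd K t a) (sadd K s a) = dl t s.
Proof. unfold dl; do 2 destruct excluded_middle_informative; auto; exfalso.
  - apply n. extensionality k. pose proof (f_equal (fun f => kadd K (f k) (kopp K (a k))) e).
    cbv beta in H; unfold sadd in H. rewrite <- !kaddA, (kaddC K (a k)), kaddN, !(kaddC K _ (k0 K)) in H.
    rewrite !kadd0 in H. auto.
  - subst; auto. Qed.

Lemma dG_ge0 x y : 0 <= dG x y.
Proof. unfold dG; pose proof (dl_ge0 (fst x) (fst y)); pose proof (D_ge0 K (snd x) (snd y)); lra. Qed.
Lemma dG_sym x y : dG x y = dG y x.
Proof. unfold dG; rewrite dl_sym, D_sym; auto. Qed.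
Lemma dG_tri x y z : dG x z <= dG x y + dG y z.
Proof. unfold dG. pose proof (dl_tri (fst x) (fst y) (fst z)). pose proof (D_tri K (snd x) (snd y) (snd z)). lra. Qed.
Lemma dG_eq0 x y : dG x y = 0 <-> x = y.
Proof. unfold dG. split.
  - intros H. pose proof (dl_ge0 (fst x) (fst y)); pose proof (D_ge0 K (snd x) (snd y)).
    assert (dl (fst x) (fst y) < 1) by lra. apply dl_lt1 in H2.
    assert (D K (snd x) (snd y) = 0) by lra. apply D_eq0 in H3. destruct x, y; simpl in *; subst; auto.
  - intros ->. rewrite dl_same. rewrite (proj2 (D_eq0 K _ _) eq_refl). lra. Qed.
Lemma dG_inv x y a : dG (gadd x a) (gadd y a) = dG x y.
Proof. unfold dG, gadd; simpl. rewrite dl_inv, D_inv. auto. Qed.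
Lemma dG_lt1 x y : dG x y < 1 -> fst x = fst y.
Proof. unfold dG; intros; apply dl_lt1. pose proof (D_ge0 K (snd x) (snd y)); lra. Qed.
Lemma dG_same_fst x y : fst x = fst y -> dG x y = D K (snd x) (snd y).
Proof. unfold dG; intros ->; rewrite dl_same; lra. Qed.

Lemma ball_open x r : gopen (fun y => dG x y < r).
Proof. intros y Hy. exists (r - dG x y). split; [lra|]. intros z Hz.
  pose proof (dG_tri x y z); lra. Qed.

Lemma sadd_A a b c : sadd K a (sadd K b c) = sadd K (sadd K a b) c.
Proof. extensionality n; unfold sadd; apply kaddA. Qed.
Lemma sadd_C a b : sadd K a b = sadd K b a.
Proof. extensionality n; unfold sadd; apply kaddC. Qed.
Lemma gaddA x y z : gadd x (gadd y z) = gadd (gadd x y) z.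
Proof. unfold gadd; simpl; rewrite !sadd_A; auto. Qed.
Lemma gaddC x y : gadd x y = gadd y x.
Proof. unfold gadd; rewrite (sadd_C (fst x)), (sadd_C (snd x)); auto. Qed.
Lemma gadd0 x : gadd gzero x = x.
Proof. destruct x as [u t]; unfold gadd; simpl; f_equal; extensionality n; unfold sadd; apply kadd0. Qed.
Lemma gaddN x : gadd (gopp x) x = gzero.
Proof. destruct x as [u t]; unfold gadd, gopp, gzero; simpl; f_equal; extensionality n; unfold sadd, sopp; apply kaddN. Qed.

Lemma dG_opp x y : dG (gopp x) (gopp y) = dG x y.
Proof.
  rewrite <- (dG_inv (gopp x) (gopp y) (gadd x y)).
  rewrite gaddA, gaddN, gadd0, (gaddC x y), gaddA, gaddN, gadd0. apply dG_sym.
Qed.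

Lemma gopen_full : gopen (fun _ => True).
Proof. intros x _; exists 1; split; auto; lra. Qed.
Lemma gopen_inter U V : gopen U -> gopen V -> gopen (fun x => U x /\ V x).
Proof. intros HU HV x [Ux Vx]. destruct (HU x Ux) as [e1 [He1 H1]].
  destruct (HV x Vx) as [e2 [He2 H2]]. exists (Rmin e1 e2). split.
  apply Rmin_glb_lt; auto. intros y Hy. split; [apply H1|apply H2];
  eapply Rlt_le_trans; eauto; [apply Rmin_l|apply Rmin_r]. Qed.
Lemma gopen_union (F : (Car -> Prop) -> Prop) : (forall U, F U -> gopen U) -> gopen (fun x => exists U, F U /\ U x).
Proof. intros HF x [U [FU Ux]]. destruct (HF U FU x Ux) as [e [He H]].
  exists e; split; auto. intros y Hy; exists U; auto. Qed.
Lemma gadd_cont W x y : gopen W -> W (gadd x y) -> exists U V, gopen U /\ gopen V /\ U x /\ V y /\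
        (forall a b, U a -> V b -> W (gadd a b)).
Proof. intros HW Hxy. destruct (HW _ Hxy) as [e [He H]].
  exists (fun a => dG x a < e/2), (fun b => dG y b < e/2).
  split; [apply ball_open|split; [apply ball_open|split; [|split; [|]]]].
  1,2: rewrite (proj2 (dG_eq0 _ _) eq_refl); lra.
  intros a b Ha Hb. apply H. pose proof (dG_tri (gadd x y) (gadd a y) (gadd a b)).
  rewrite (dG_inv x a y) in H0. rewrite (gaddC a y), (gaddC a b), (dG_inv y b a) in H0.
  rewrite (gaddC a b). lra. Qed.
Lemma gopp_cont W : gopen W -> gopen (fun x => W (gopp x)).
Proof. intros HW x Hx. destruct (HW _ Hx) as [e [He H]]. exists e; split; auto.
  intros y Hy. apply H. rewrite dG_opp; auto. Qed.
Lemma ghaus x y : x <> y -> exists U V, gopen U /\ gopen V /\ U x /\ V y /\ (forall z, U z -> V z -> False).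
Proof. intros Hne. set (r := dG x y). assert (0 < r).
  { pose proof (dG_ge0 x y). destruct H; auto. exfalso; apply Hne, dG_eq0; auto. }
  exists (fun z => dG x z < r/2), (fun z => dG y z < r/2).
  split; [apply ball_open|split; [apply ball_open|split; [|split; [|]]]].
  1,2: rewrite (proj2 (dG_eq0 _ _) eq_refl); lra.
  intros z H1 H2. pose proof (dG_tri x z y). rewrite (dG_sym z y) in H0. unfold r in *. lra. Qed.

Definition GK : TopAbGroup := {|
  carrier := Car; add := gadd; zero := gzero; opp := gopp;
  addA := gaddA; addC := gaddC; add0 := gadd0; addN := gaddN;
  is_open := gopen; open_full := gopen_full; open_inter := gopen_inter;
  open_union := gopen_union; add_cont := gadd_cont; opp_cont := gopp_cont;
  hausdorff := ghaus |}.

Lemma GK_metrizable : metrizable GK.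
Proof. exists dG. repeat split; intros; try apply dG_ge0; try apply dG_sym; try apply dG_tri;
  try (apply dG_eq0; auto); auto. Qed.
End GK.

Section Tree.
Variable K : MK.
Definition Dopen (V : Seq K -> Prop) := forall t, V t -> exists e, 0 < e /\ forall s, D K t s < e -> V s.
Definition Xcompact := forall F : (Seq K -> Prop) -> Prop, (forall V, F V -> Dopen V) ->
  (forall t, exists V, F V /\ V t) ->
  exists l, (forall V, In V l -> F V) /\ (forall t, exists V, In V l /\ V t).
Definition upd (p : nat -> bool) k b : nat -> bool := fun i => if Nat.eq_dec i k then b else p i.

Lemma tree_compact (B : (nat -> bool) -> nat -> Seq K -> Prop) :
 (forall p t, B p 0%nat t) ->
 (forall p p' k, (forall i, (i < k)%nat -> p i = p' i) -> forall t, B p k t -> B p' k t) ->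
 (forall p k t, B p k t -> exists b, B (upd p k b) (S k) t) ->
 (forall p, exists x, forall e, 0 < e -> exists k, forall t, B p k t -> D K x t < e) ->
 Xcompact.
Proof.
  intros H0 Hdep Hsplit Hconv F HF Hcov.
  apply NNPP; intros Hno.
  set (NF := fun S : Seq K -> Prop => ~ exists l, (forall V, In V l -> F V) /\ (forall t, S t -> exists V, In V l /\ V t)).
  assert (Hstep : forall p k, NF (B p k) -> exists b, NF (B (upd p k b) (S k))).
  { intros p k Hn. apply NNPP; intros Hb. apply Hn.
    assert (Hf : ~ NF (B (upd p k false) (S k))) by (intro; apply Hb; eauto).
    assert (Ht : ~ NF (B (upd p k true) (S k))) by (intro; apply Hb; eauto).
    unfold NF in Hf, Ht. apply NNPP in Hf, Ht. destruct Hf as [l1 [A1 B1]], Ht as [l2 [A2 B2]].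
    exists (l1 ++ l2). split. intros V HV; apply in_app_or in HV; destruct HV; auto.
    intros t Ht. destruct (Hsplit p k t Ht) as [[|] Hb'].
    destruct (B2 t Hb') as [V [HV1 HV2]]; exists V; split; auto; apply in_or_app; auto.
    destruct (B1 t Hb') as [V [HV1 HV2]]; exists V; split; auto; apply in_or_app; auto. }
  set (ch := fun p k => epsilon (inhabits false) (fun b => NF (B (upd p k b) (S k)))).
  set (q := fix q (k : nat) : nat -> bool := match k with O => fun _ => false | S k => upd (q k) k (ch (q k) k) end).
  assert (Hq : forall k, NF (B (q k) k)).
  { induction k.
    - intros [l [A1 B1]]. apply Hno. exists l; split; auto.
    - simpl. unfold ch. apply epsilon_spec. apply Hstep; auto. }
  set (p := fun i => q (S i) i).
  assert (Hqp : forall k i, (i < k)%nat -> q k i = p i).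
  { intros k i Hik. induction Hik. reflexivity. simpl. unfold upd at 1.
    destruct Nat.eq_dec; [lia|]. auto. }
  destruct (Hconv p) as [x Hx]. destruct (Hcov x) as [U [FU Ux]].
  destruct (HF U FU x Ux) as [e [He HU]]. destruct (Hx e He) as [k Hk].
  apply (Hq k). exists (U :: nil). split.
  intros V [<-|[]]; auto.
  intros t Ht. exists U; split; [left; auto|]. apply HU, Hk.
  apply (Hdep (q k)); auto.
Qed.
End Tree.

Section Gen.
Variable K : MK.
Definition ev (u : Seq K) : Seq K := fun n => u (2 * n)%nat.
Definition od (u : Seq K) : Seq K := fun n => u (S (2 * n))%nat.
Definition merge (a b : Seq K) : Seq K := fun m => if Nat.even m then a (Nat.div2 m) else b (Nat.div2 m).
Lemma merge_ev a b n : merge a b (2 * n)%nat = a n.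
Proof. unfold merge. rewrite Nat.even_mul, Nat.div2_double. reflexivity. Qed.
Lemma merge_od a b n : merge a b (S (2 * n))%nat = b n.
Proof. unfold merge. rewrite Nat.even_succ, Nat.odd_mul, Nat.div2_succ_double. reflexivity. Qed.
Lemma idx_cases (m : nat) : exists n, m = (2 * n)%nat \/ m = S (2 * n).
Proof. destruct (Nat.Even_or_Odd m) as [[n Hn]|[n Hn]]; exists n; lia. Qed.

Definition fK (x : Car K) : Car K := (ev (fst x), merge (od (fst x)) (snd x)).

Lemma D_merge a t t' : D K (merge a t) (merge a t') <= D K t t' / 2.
Proof. apply D_le. intros m. destruct (idx_cases m) as [n [->| ->]].
  - rewrite !merge_ev. rewrite (proj2 (dK_eq0 K _ _) eq_refl). pose proof (D_ge0 K t t'). lra.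
  - rewrite !merge_od. pose proof (D_ge K t t' n). pose proof (dK_ge0 K (t n) (t' n)).
    assert ((/2)^(S (2*n)) <= /2 * (/2)^n).
    { rewrite hp_S. pose proof (hp_mono n (2*n) ltac:(lia)). pose proof (hp_pos n). lra. }
    apply Rle_trans with (dK K (t n) (t' n) * (/2 * (/2)^n)). apply Rmult_le_compat_l; auto. lra.
Qed.

Lemma fK_cont : continuous (GK K) fK.
Proof. intros W HW x Hx. destruct (HW _ Hx) as [e [He H]]. exists (Rmin 1 e). split.
  apply Rmin_glb_lt; lra. intros y Hy. apply H.
  assert (Hd1 : dG K x y < 1) by (eapply Rlt_le_trans; [apply Hy|apply Rmin_l]).
  pose proof (dG_lt1 K x y Hd1) as Hf.
  rewrite dG_same_fst by (simpl; rewrite Hf; auto). simpl. rewrite Hf.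
  rewrite dG_same_fst in Hy by auto. pose proof (Rmin_r 1 e).
  pose proof (D_merge (od (fst y)) (snd x) (snd y)). pose proof (D_ge0 K (snd x) (snd y)). lra.
Qed.

Lemma fK_aut : cont_automorphism (GK K) fK.
Proof. split; [|split; [|split]].
  - intros [u t] [v s]. simpl. unfold fK, gadd; simpl. f_equal. extensionality m.
    unfold merge, sadd, od. destruct (Nat.even m); reflexivity.
  - intros [u t] [v s] H. unfold fK in H; simpl in H. injection H as H1 H2.
    assert (Ht : t = s). { extensionality n. rewrite <- (merge_od (od u) t n), <- (merge_od (od v) s n), H2. auto. }
    assert (Hu : u = v). { extensionality m. destruct (idx_cases m) as [n [->| ->]].
      - apply (f_equal (fun f => f n)) in H1. exact H1.
      - change (od u n = od v n). rewrite <- (merge_ev (od u) t n), <- (merge_ev (od v) s n), H2. auto. }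
    subst; auto.
  - intros [v s]. exists (merge v (ev s), od s). unfold fK; simpl. f_equal.
    + extensionality n. unfold ev at 1. rewrite merge_ev. auto.
    + extensionality m. destruct (idx_cases m) as [n [->| ->]].
      * rewrite merge_ev. unfold od. rewrite merge_od. auto.
      * rewrite merge_od. auto.
  - apply fK_cont.
Qed.

Lemma GK_not_rev : ~ g_reversible (GK K).
Proof.
  intros Hrev. pose proof (Hrev fK fK_aut) as Hop.
  set (U := fun x : Car K => fst x = (fun _ => k0 K)).
  assert (HU : gopen K U).
  { intros x Hx. exists 1. split; [lra|]. intros y Hy. unfold U. rewrite <- (dG_lt1 K x y Hy). auto. }
  specialize (Hop U HU (fK (gzero K))). destruct Hop as [e [He Hb]].
  { exists (gzero K); split; auto. reflexivity. }
  destruct (hp_small e He) as [n Hn].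
  set (s := fun j => if Nat.eq_dec j (2 * n)%nat then k1 K else k0 K).
  destruct (Hb ((fun _ => k0 K), s)) as [[u t] [Hu Hf]].
  - rewrite dG_same_fst by reflexivity. simpl.
    eapply Rle_lt_trans; [|apply Hn]. eapply Rle_trans; [|apply (hp_mono n (2*n)); lia].
    apply D_le. intros j. unfold s. destruct Nat.eq_dec.
    + pose proof (dK_le1 K (merge (od (fun _ => k0 K)) (fun _ => k0 K) j) (k1 K)). subst j.
      pose proof (hp_pos (2*n)). nra.
    + replace (merge (od (fun _ => k0 K)) (fun _ => k0 K) j) with (k0 K) by (unfold merge; destruct Nat.even; auto).
      rewrite (proj2 (dK_eq0 K _ _) eq_refl). rewrite Rmult_0_l; left; apply hp_pos.
  - unfold fK in Hf. simpl in Hf. injection Hf as _ H2.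
    apply (f_equal (fun f => f (2 * n)%nat)) in H2. rewrite merge_ev in H2.
    unfold U in Hu; simpl in Hu. subst u. unfold od, s in H2. destruct Nat.eq_dec; [|lia].
    apply (k1_ne K); auto.
Qed.

Lemma GK_lc : Xcompact K -> locally_compact (GK K).
Proof.
  intros HX x. set (U := fun y : Car K => fst y = fst x). exists U, U. split; [|split; [reflexivity|split; auto]].
  { intros y Hy. exists 1. split; [lra|]. intros z Hz. unfold U. rewrite <- (dG_lt1 K y z Hz). auto. }
  intros F HF Hcov.
  destruct (HX (fun V => exists W, F W /\ V = fun t => W (fst x, t))) as [l [Hl1 Hl2]].
  - intros V [W [FW ->]] t Ht. destruct (HF W FW _ Ht) as [e [He H]]. exists e; split; auto.
    intros s Hs. apply H. rewrite dG_same_fst by reflexivity. auto.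
  - intros t. destruct (Hcov (fst x, t) eq_refl) as [W [FW HW]]. exists (fun s => W (fst x, s)); split; [exists W; split; auto|auto].
  - assert (Hgen : forall l, (forall V, In V l -> exists W, F W /\ V = fun t => W (fst x, t)) ->
       exists l', (forall W, In W l' -> F W) /\ forall t, (exists V, In V l /\ V t) -> exists W, In W l' /\ W (fst x, t)).
    { induction l0 as [|V l0 IH]; intros Hl.
      - exists nil. split. intros _ []. intros t [V [[] _]].
      - destruct (Hl V (or_introl eq_refl)) as [W [FW ->]].
        destruct IH as [l' [A B]]. intros; apply Hl; right; auto.
        exists (W :: l'). split. intros W' [<-|HW']; auto.
        intros t [V' [[<-|HV'] Vt]]. exists W; split; [left|]; auto.
        destruct (B t (ex_intro _ V' (conj HV' Vt))) as [W' [? ?]]. exists W'; split; [right|]; auto. }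
    destruct (Hgen l Hl1) as [l' [A B]]. exists l'. split; auto.
    intros [u t] Hy. unfold U in Hy; simpl in Hy; subst u. apply B, Hl2.
Qed.
End Gen.

Definition bd (x y : bool) : R := if Bool.eqb x y then 0 else 1.
Lemma bd_ge0 x y : 0 <= bd x y. Proof. destruct x, y; simpl; unfold bd; simpl; lra. Qed.
Lemma bd_le1 x y : bd x y <= 1. Proof. destruct x, y; unfold bd; simpl; lra. Qed.
Lemma bd_eq0 x y : bd x y = 0 <-> x = y. Proof. destruct x, y; unfold bd; simpl; split; intros; try lra; congruence. Qed.
Lemma bd_sym x y : bd x y = bd y x. Proof. destruct x, y; reflexivity. Qed.
Lemma bd_tri x y z : bd x z <= bd x y + bd y z. Proof. destruct x, y, z; unfold bd; simpl; lra. Qed.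
Lemma bd_inv x y a : bd (xorb x a) (xorb y a) = bd x y. Proof. destruct x, y, a; reflexivity. Qed.
Lemma bd_ultra x y z : bd x z <= Rmax (bd x y) (bd y z).
Proof. destruct x, y, z; unfold bd, Rmax; simpl; destruct Rle_dec; lra. Qed.

Definition KB : MK := {|
  kT := bool; kadd := xorb; k0 := false; kopp := fun x => x;
  kaddA := fun x y z => eq_sym (xorb_assoc_reverse x y z);
  kaddC := xorb_comm; kadd0 := xorb_false_l; kaddN := xorb_nilpotent;
  dK := bd; dK_ge0 := bd_ge0; dK_le1 := bd_le1; dK_eq0 := bd_eq0; dK_sym := bd_sym;
  dK_tri := bd_tri; dK_inv := bd_inv; k1 := true; k1_ne := diff_true_false |}.

Lemma KB_compact : Xcompact KB.
Proof.
  apply (tree_compact KB (fun p k t => forall i, (i < k)%nat -> t i = p i)).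
  - intros p t i Hi; lia.
  - intros p p' k H t Ht i Hi. rewrite Ht, H; auto.
  - intros p k t Ht. exists (t k). intros i Hi. unfold upd. destruct Nat.eq_dec; subst; auto.
    apply Ht; lia.
  - intros p. exists p. intros e He. destruct (hp_small e He) as [k Hk]. exists k.
    intros t Ht. eapply Rle_lt_trans; [|apply Hk]. apply D_le. intros i.
    destruct (Nat.lt_ge_cases i k).
    + rewrite Ht by auto. simpl. rewrite (proj2 (bd_eq0 _ _) eq_refl). rewrite Rmult_0_l; left; apply hp_pos.
    + simpl. pose proof (bd_le1 (p i) (t i)). pose proof (bd_ge0 (p i) (t i)). pose proof (hp_mono k i H).
      pose proof (hp_pos i). nra.
Qed.

Lemma DB_ultra t s u : D KB t u <= Rmax (D KB t s) (D KB s u).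
Proof. apply D_le. intros n. pose proof (D_ge KB t s n). pose proof (D_ge KB s u n).
  pose proof (bd_ultra (t n) (s n) (u n)). pose proof (hp_pos n). simpl in *.
  apply Rle_trans with (Rmax (bd (t n) (s n)) (bd (s n) (u n)) * (/2)^n). nra.
  unfold Rmax in *. destruct Rle_dec; destruct Rle_dec; nra. Qed.

Lemma GB_zd : zero_dimensional (GK KB).
Proof.
  intros U x HU Ux. destruct (HU x Ux) as [e [He H]]. set (r := Rmin 1 e).
  assert (Hr : 0 < r) by (apply Rmin_glb_lt; lra).
  exists (fun y => dG KB x y < r). split; [apply ball_open|split; [|split]].
  - intros y Hy. destruct (classic (fst y = fst x)) as [Hf|Hf].
    + exists r. split; auto. intros z Hz Hxz.
      assert (Hyz : dG KB y z < 1) by (pose proof (Rmin_l 1 e); fold r in H0; lra).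
      pose proof (dG_lt1 KB y z Hyz) as Hf2.
      rewrite dG_same_fst in Hy, Hz, Hxz by congruence.
      apply Hy. pose proof (DB_ultra (snd x) (snd z) (snd y)). rewrite (D_sym KB (snd z)) in H0.
      unfold Rmax in H0; destruct Rle_dec; lra.
    + exists 1. split; [lra|]. intros z Hz Hxz. apply Hf. rewrite (dG_lt1 KB y z Hz).
      symmetry. apply dG_lt1. pose proof (Rmin_l 1 e); fold r in H0; lra.
  - rewrite (proj2 (dG_eq0 _ _ _) eq_refl); auto.
  - intros y Hy. apply H. pose proof (Rmin_r 1 e); fold r in H0; lra.
Qed.

Lemma GB_two (x : GK KB) : add x x = zero.
Proof. destruct x as [u t]. simpl. unfold gadd, gzero, sadd; simpl. f_equal; extensionality n; apply xorb_nilpotent. Qed.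

Lemma part1 : exists G : TopAbGroup,
      zero_dimensional G /\ locally_compact G /\ metrizable G /\
      (forall x : G, add x x = zero) /\ ~ g_reversible G.
Proof. exists (GK KB). split; [apply GB_zd|split; [apply GK_lc, KB_compact|split; [apply GK_metrizable|split; [apply GB_two|apply GK_not_rev]]]]. Qed.

Definition TT := {x : R | 0 <= x < 1}.
Definition tv (x : TT) : R := proj1_sig x.
Lemma tv_rng x : 0 <= tv x < 1. Proof. destruct x; simpl; auto. Qed.
Definition fr (z : R) : R := if Rle_dec 0 z then if Rlt_dec z 1 then z else 0 else 0.
Lemma fr_ok z : 0 <= fr z < 1.
Proof. unfold fr; destruct Rle_dec; [destruct Rlt_dec|]; lra. Qed.
Lemma fr_id z : 0 <= z < 1 -> fr z = z.
Proof. intros; unfold fr; destruct Rle_dec; [destruct Rlt_dec|]; lra. Qed.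
Definition toT (z : R) : TT := exist _ (fr z) (fr_ok z).
Lemma tv_toT z : 0 <= z < 1 -> tv (toT z) = z.
Proof. intros; simpl; apply fr_id; auto. Qed.
Lemma T_eq (x y : TT) : tv x = tv y -> x = y.
Proof. destruct x, y; simpl; intros ->; f_equal; apply proof_irrelevance. Qed.

Definition g (a b : R) : R := if Rlt_dec (a + b) 1 then a + b else a + b - 1.
Lemma g_rng a b : 0 <= a < 1 -> 0 <= b < 1 -> 0 <= g a b < 1.
Proof. intros; unfold g; destruct Rlt_dec; lra. Qed.
Definition tadd (x y : TT) : TT := toT (g (tv x) (tv y)).
Lemma tv_tadd x y : tv (tadd x y) = g (tv x) (tv y).
Proof. apply tv_toT, g_rng; apply tv_rng. Qed.
Definition tneg (a : R) : R := if Req_EM_T a 0 then 0 else 1 - a.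
Definition topp (x : TT) : TT := toT (tneg (tv x)).
Lemma tv_topp x : tv (topp x) = tneg (tv x).
Proof. apply tv_toT. pose proof (tv_rng x). unfold tneg; destruct Req_EM_T; lra. Qed.
Definition t0 : TT := toT 0.
Lemma tv_t0 : tv t0 = 0. Proof. apply tv_toT; lra. Qed.

Lemma taddA x y z : tadd x (tadd y z) = tadd (tadd x y) z.
Proof. apply T_eq. rewrite !tv_tadd. pose proof (tv_rng x); pose proof (tv_rng y); pose proof (tv_rng z).
  unfold g; repeat destruct Rlt_dec; lra. Qed.
Lemma taddC x y : tadd x y = tadd y x.
Proof. apply T_eq. rewrite !tv_tadd. unfold g; rewrite Rplus_comm; auto. Qed.
Lemma tadd0 x : tadd t0 x = x.
Proof. apply T_eq. rewrite tv_tadd, tv_t0. pose proof (tv_rng x). unfold g; destruct Rlt_dec; lra. Qed.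
Lemma taddN x : tadd (topp x) x = t0.
Proof. apply T_eq. rewrite tv_tadd, tv_topp, tv_t0. pose proof (tv_rng x).
  unfold g, tneg; destruct Req_EM_T; destruct Rlt_dec; lra. Qed.

Definition dr (a b : R) : R := Rmin (Rabs (a - b)) (1 - Rabs (a - b)).
Ltac drc := unfold dr, Rmin, Rabs in *; repeat (destruct Rle_dec || destruct Rcase_abs); lra.
Definition dT (x y : TT) : R := dr (tv x) (tv y).
Lemma dT_ge0 x y : 0 <= dT x y.
Proof. unfold dT; pose proof (tv_rng x); pose proof (tv_rng y); drc. Qed.
Lemma dT_le1 x y : dT x y <= 1.
Proof. unfold dT; pose proof (tv_rng x); pose proof (tv_rng y); drc. Qed.
Lemma dT_eq0 x y : dT x y = 0 <-> x = y.
Proof. split. intros H; apply T_eq. unfold dT in H. pose proof (tv_rng x); pose proof (tv_rng y); drc.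
  intros ->. unfold dT. pose proof (tv_rng y); drc. Qed.
Lemma dT_sym x y : dT x y = dT y x.
Proof. unfold dT; pose proof (tv_rng x); pose proof (tv_rng y); drc. Qed.
Lemma dT_tri x y z : dT x z <= dT x y + dT y z.
Proof. unfold dT; pose proof (tv_rng x); pose proof (tv_rng y); pose proof (tv_rng z); drc. Qed.
Lemma dT_inv x y a : dT (tadd x a) (tadd y a) = dT x y.
Proof. unfold dT; rewrite !tv_tadd. pose proof (tv_rng x); pose proof (tv_rng y); pose proof (tv_rng a).
  unfold g; destruct Rlt_dec; destruct Rlt_dec; drc. Qed.
Lemma k1T_ne : toT (1/2) <> t0.
Proof. intros H. apply (f_equal tv) in H. rewrite tv_t0, tv_toT in H; lra. Qed.

Definition KT : MK := {|
  kT := TT; kadd := tadd; k0 := t0; kopp := topp;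
  kaddA := taddA; kaddC := taddC; kadd0 := tadd0; kaddN := taddN;
  dK := dT; dK_ge0 := dT_ge0; dK_le1 := dT_le1; dK_eq0 := dT_eq0; dK_sym := dT_sym;
  dK_tri := dT_tri; dK_inv := dT_inv; k1 := toT (1/2); k1_ne := k1T_ne |}.

Definition sc (k : nat) : nat := (k - Nat.sqrt k * Nat.sqrt k)%nat.
Lemma sc_eq s n : (n <= 2 * s)%nat -> sc (s * s + n) = n.
Proof. intros H. unfold sc. rewrite (Nat.sqrt_unique (s * s + n) s) by lia. lia. Qed.

Definition half (b : bool) (iv : R * R) : R * R :=
  if b then ((fst iv + snd iv) / 2, snd iv) else (fst iv, (fst iv + snd iv) / 2).
Fixpoint box (p : nat -> bool) (k : nat) : nat -> R * R :=
  match k with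
  | O => fun _ => (0, 1)
  | S k => fun n => if Nat.eq_dec n (sc k) then half (p k) (box p k n) else box p k n
  end.

Lemma box_dep p p' k : (forall i, (i < k)%nat -> p i = p' i) -> forall n, box p k n = box p' k n.
Proof. induction k; intros H n; simpl; auto. rewrite IHk by (intros; apply H; lia).
  rewrite H by lia. auto. Qed.

Definition len p k n := snd (box p k n) - fst (box p k n).
Lemma box_le p k n : fst (box p k n) <= snd (box p k n).
Proof. induction k; simpl; [lra|]. destruct Nat.eq_dec; auto. unfold half; destruct (p k); simpl; lra. Qed.
Lemma box_step p k n : fst (box p k n) <= fst (box p (S k) n) /\ snd (box p (S k) n) <= snd (box p k n)
  /\ len p (S k) n <= len p k n.
Proof. pose proof (box_le p k n). unfold len; simpl. destruct Nat.eq_dec; [|lra].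
  unfold half; destruct (p k); simpl; lra. Qed.
Lemma box_mono p k k' n : (k <= k')%nat -> fst (box p k n) <= fst (box p k' n) /\ snd (box p k' n) <= snd (box p k n)
  /\ len p k' n <= len p k n.
Proof. induction 1; [lra|]. pose proof (box_step p m n). lra. Qed.
Lemma len_split p s n : (n <= 2 * s)%nat -> len p (S (s * s + n)) n = len p (s * s + n) n / 2.
Proof. intros H. unfold len. simpl box. rewrite sc_eq by auto. destruct Nat.eq_dec; [|lia].
  unfold half; destruct (p _); simpl; lra. Qed.
Lemma len0 p n : len p 0 n = 1. Proof. unfold len; simpl; lra. Qed.
Lemma len_bound p n j : len p (S ((n + j) * (n + j) + n)) n <= (/2)^(S j).
Proof. induction j.
  - rewrite len_split by lia. pose proof (box_mono p 0 ((n+0)*(n+0)+n) n ltac:(lia)). rewrite len0 in H.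
    simpl; lra.
  - rewrite len_split by lia. pose proof (box_mono p (S ((n + j) * (n + j) + n)) ((n + S j) * (n + S j) + n) n ltac:(nia)).
    rewrite hp_S. lra.
Qed.
Lemma len_small p N e : 0 < e -> exists k, forall n, (n <= N)%nat -> len p k n < e.
Proof. intros He. destruct (hp_small e He) as [j Hj]. exists (S ((N + j) * (N + j) + N)).
  intros n Hn. pose proof (len_bound p n j). pose proof (box_mono p (S ((n + j) * (n + j) + n)) (S ((N + j) * (N + j) + N)) n ltac:(nia)).
  pose proof (hp_mono j (S j) ltac:(lia)). lra. Qed.

Definition Bx (p : nat -> bool) k (t : Seq KT) : Prop := forall n, fst (box p k n) <= tv (t n) <= snd (box p k n).

Lemma dr_le_abs a b : dr a b <= Rabs (a - b). Proof. unfold dr; apply Rmin_l. Qed.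
Lemma dr_le_co a b : dr a b <= 1 - Rabs (a - b). Proof. unfold dr; apply Rmin_r. Qed.

Lemma limpt p n : exists y, forall k, fst (box p k n) <= y <= snd (box p k n).
Proof.
  set (E := fun r => exists k, r = fst (box p k n)).
  assert (HB : bound E). { exists 1. intros r [k ->]. pose proof (box_mono p 0 k n ltac:(lia)). pose proof (box_le p k n). simpl in H; lra. }
  assert (HE : exists r, E r) by (eexists; exists 0%nat; reflexivity).
  destruct (completeness E HB HE) as [y [H1 H2]]. exists y. intros k. split.
  - apply H1; exists k; auto.
  - apply H2. intros r [k' ->]. destruct (Nat.le_ge_cases k k').
    + pose proof (box_mono p k k' n H). pose proof (box_le p k' n). lra.
    + pose proof (box_mono p k' k n H). pose proof (box_le p k n). lra.
Qed.

Lemma KT_compact : Xcompact KT.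
Proof.
  apply (tree_compact KT Bx).
  - intros p t n. simpl. pose proof (tv_rng (t n)). lra.
  - intros p p' k H t Ht n. rewrite <- (box_dep p p' k H). auto.
  - intros p k t Ht. set (n := sc k). set (iv := box p k n).
    assert (Hd : forall b, box (upd p k b) k = box p k).
    { intros b. extensionality m. apply box_dep. intros i Hi. unfold upd. destruct Nat.eq_dec; [lia|auto]. }
    exists (if Rle_dec (tv (t n)) ((fst iv + snd iv)/2) then false else true).
    intros m. simpl. rewrite Hd. destruct Nat.eq_dec.
    + subst m. unfold upd. destruct Nat.eq_dec; [|lia]. specialize (Ht (sc k)). fold n in Ht |- *. fold iv in Ht |- *.
      unfold half. destruct Rle_dec; simpl; lra.
    + apply Ht.
  - intros p. assert (Hy : forall n, exists y, forall k, fst (box p k n) <= y <= snd (box p k n)) by apply limpt.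
    apply choice in Hy. destruct Hy as [y Hy]. exists (fun n => toT (y n)).
    intros e He.
    assert (Hterm : forall k t n, Bx p k t -> dT (toT (y n)) (t n) <= len p k n).
    { intros k t n Ht. specialize (Ht n). pose proof (Hy n k) as Hk. pose proof (Hy n 0%nat) as H0. simpl in H0.
      unfold dT, len. pose proof (tv_rng (t n)). destruct (Rlt_dec (y n) 1).
      - rewrite tv_toT by lra. eapply Rle_trans; [apply dr_le_abs|]. unfold Rabs; destruct Rcase_abs; lra.
      - assert (y n = 1) by lra. assert (Hv : tv (toT (y n)) = 0).
        { simpl. unfold fr. destruct Rle_dec; [destruct Rlt_dec|]; lra. }
        rewrite Hv. eapply Rle_trans; [apply dr_le_co|]. unfold Rabs; destruct Rcase_abs; lra. }
    destruct (hp_small (e/2) ltac:(lra)) as [N HN].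
    destruct (len_small p N (e/2) ltac:(lra)) as [k Hk]. exists k. intros t Ht.
    apply Rle_lt_trans with (e/2); [|lra]. apply D_le. intros n. simpl.
    pose proof (dT_ge0 (toT (y n)) (t n)). pose proof (dT_le1 (toT (y n)) (t n)). pose proof (hp_pos n).
    pose proof (hp_le1 n).
    destruct (Nat.le_gt_cases n N).
    + pose proof (Hterm k t n Ht). pose proof (Hk n H3). nra.
    + pose proof (hp_mono N n ltac:(lia)). nra.
Qed.

Section Path.
Variable K : MK.
Lemma path_conn (V : Car K -> Prop) :
  (forall a b, V a -> V b -> exists gm : R -> Car K, gm 0 = a /\ gm 1 = b /\
     (forall l, 0 <= l <= 1 -> V (gm l)) /\
     (forall l m, 0 <= l <= 1 -> 0 <= m <= 1 -> dG K (gm l) (gm m) <= Rabs (l - m))) ->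
  connected (GK K) V.
Proof.
  intros Hp [A [B [HA [HB [Hcov [[a [Va Aa]] [[b [Vb Bb]] Hdis]]]]]]].
  destruct (Hp a b Va Vb) as [gm [G0 [G1 [GV GL]]]].
  set (S := fun l => 0 <= l <= 1 /\ forall m, 0 <= m <= l -> A (gm m)).
  assert (HSb : bound S) by (exists 1; intros l [? _]; lra).
  assert (S0 : S 0). { split; [lra|]. intros m Hm. replace m with 0 by lra. rewrite G0; auto. }
  assert (HS0 : exists l, S l) by (exists 0; auto).
  destruct (completeness S HSb HS0) as [L [H1 H2]].
  assert (HL0 : 0 <= L) by (apply H1; auto).
  assert (HL1 : L <= 1) by (apply H2; intros l [? _]; lra).
  assert (Happ : forall e, 0 < e -> exists l, S l /\ L - e < l /\ l <= L).
  { intros e He. apply NNPP; intros Hn. assert (L <= L - e); [|lra].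
    apply H2. intros l Sl. apply Rnot_lt_le. intros Hl. apply Hn. exists l. repeat split; auto; try apply H1; auto; apply Sl. }
  destruct (Hcov (gm L) (GV L (conj HL0 HL1))) as [AL|BL].
  - destruct (HA _ AL) as [e [He HAe]]. destruct (Happ e He) as [l' [[Hl' Sl'] [Hl'1 Hl'2]]].
    set (M := Rmin 1 (L + e/2)).
    assert (SM : S M).
    { split. unfold M; split; [apply Rmin_glb; lra|apply Rmin_l].
      intros m Hm. destruct (Rle_lt_dec m l'). apply Sl'; lra.
      apply HAe. eapply Rle_lt_trans; [apply GL|]. lra. split; [lra|]. pose proof (Rmin_l 1 (L + e/2)); fold M in H; lra.
      pose proof (Rmin_r 1 (L + e/2)); fold M in H. unfold Rabs; destruct Rcase_abs; lra. }
    assert (HM : M <= L) by (apply H1; auto).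
    assert (L = 1). { unfold M, Rmin in HM; destruct Rle_dec; lra. }
    subst L. rewrite G1 in AL. apply (Hdis b); auto.
  - destruct (HB _ BL) as [e [He HBe]]. destruct (Happ e He) as [l' [[Hl' Sl'] [Hl'1 Hl'2]]].
    apply (Hdis (gm l')). apply GV; auto. apply Sl'; lra.
    apply HBe. eapply Rle_lt_trans; [apply GL|]. lra. lra. unfold Rabs; destruct Rcase_abs; lra.
Qed.
End Path.

Lemma min_pos (f : nat -> R) N : (forall n, (n < N)%nat -> 0 < f n) -> exists d, 0 < d /\ forall n, (n < N)%nat -> d <= f n.
Proof. intros Hf. induction N. exists 1; split; [lra|]; intros; lia.
  destruct IHN as [d [Hd H]]. intros; apply Hf; lia. exists (Rmin d (f N)). split. apply Rmin_glb_lt; auto.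
  intros n Hn. destruct (Nat.eq_dec n N). subst; apply Rmin_r. eapply Rle_trans; [apply Rmin_l|]. apply H; lia. Qed.

Lemma conv_abs a b h l r : 0 <= l <= 1 -> Rabs (a - h) < r -> Rabs (b - h) < r -> Rabs (a + l * (b - a) - h) < r.
Proof. intros Hl Ha Hb. replace (a + l * (b - a) - h) with ((1 - l) * (a - h) + l * (b - h)) by ring.
  eapply Rle_lt_trans; [apply Rabs_triang|]. rewrite !Rabs_mult, (Rabs_pos_eq l), (Rabs_pos_eq (1 - l)) by lra.
  pose proof (Rabs_pos (a - h)); pose proof (Rabs_pos (b - h)). assert (0 <= (1 - l) * (r - Rabs (a - h))) by (apply Rmult_le_pos; lra). assert (0 <= l * (r - Rabs (b - h))) by (apply Rmult_le_pos; lra). destruct (Rle_lt_dec l 0). assert (l = 0) by lra. subst. lra. assert (0 < l * (r - Rabs (b - h))) by (apply Rmult_lt_0_compat; lra). lra. Qed.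

Lemma conv01 a b l : 0 <= l <= 1 -> 0 <= a < 1 -> 0 <= b < 1 -> 0 <= (1 - l) * a + l * b < 1.
Proof. intros. assert (0 <= (1 - l) * a) by (apply Rmult_le_pos; lra). assert (0 <= l * b) by (apply Rmult_le_pos; lra).
  assert (0 <= (1 - l) * (1 - a)) by (apply Rmult_le_pos; lra).
  destruct (Rle_lt_dec l 0). assert (l = 0) by lra. subst. lra.
  assert (0 < l * (1 - b)) by (apply Rmult_lt_0_compat; lra). lra. Qed.

Lemma grp_cancel (K : MK) s t c : kadd K (kadd K (kadd K (kadd K s (kopp K t)) c) (kopp K c)) t = s.
Proof. rewrite <- !kaddA. rewrite (kaddA K c (kopp K c) t), (kaddC K c (kopp K c)), kaddN, kadd0.
  rewrite (kaddC K (kopp K t) t). rewrite <- (kaddC K (kopp K t)), kaddN, kaddC, kadd0. auto. Qed.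

Lemma KT_lconn : locally_connected (GK KT).
Proof.
  intros U x HU Ux. destruct (HU x Ux) as [e [He HUe]].
  set (r := Rmin 1 e). assert (Hr : 0 < r) by (apply Rmin_glb_lt; lra).
  set (u := fst x). set (t := snd x).
  set (c := fun _ : nat => toT (1/2) : KT).
  set (sig := fun s : Seq KT => sadd KT (sadd KT s (sopp KT t)) c).
  set (tau := fun w : Seq KT => sadd KT (sadd KT w (sopp KT c)) t).
  assert (Hts : forall s, tau (sig s) = s). { intros s; extensionality n; apply grp_cancel. }
  assert (Hst : forall w, sig (tau w) = w). { intros w; extensionality n; apply grp_cancel. }
  assert (Dsig : forall a b, D KT (sig a) (sig b) = D KT a b). { intros; unfold sig; rewrite !D_inv; auto. }
  assert (Dtau : forall a b, D KT (tau a) (tau b) = D KT a b). { intros; unfold tau; rewrite !D_inv; auto. }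
  set (rho := Rmin (1/4) (r/2)). assert (Hrho : 0 < rho) by (apply Rmin_glb_lt; lra).
  assert (Hrho1 : rho <= 1/4) by apply Rmin_l. assert (Hrho2 : rho <= r/2) by apply Rmin_r.
  destruct (hp_small (r/2) ltac:(lra)) as [N HN].
  set (P := fun w : Seq KT => forall n, (n < N)%nat -> Rabs (tv (w n) - 1/2) < rho).
  exists (fun y : Car KT => fst y = u /\ P (sig (snd y))).
  split; [|split; [|split]].
  -
    intros y [Hy1 Hy2]. set (w := sig (snd y)).
    destruct (min_pos (fun n => Rmin (rho - Rabs (tv (w n) - 1/2)) (1/4) * (/2)^n) N) as [d [Hd Hdn]].
    { intros n H. apply Rmult_lt_0_compat; [|apply hp_pos]. apply Rmin_glb_lt; [|lra]. specialize (Hy2 n H). fold w in Hy2. lra. }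
    exists (Rmin 1 d). split; [apply Rmin_glb_lt; lra|]. intros z Hz.
    assert (Hz1 : dG KT y z < 1) by (pose proof (Rmin_l 1 d); lra).
    pose proof (dG_lt1 KT y z Hz1) as Hf. split; [congruence|].
    rewrite dG_same_fst in Hz by auto. pose proof (Rmin_r 1 d).
    intros n Hn. pose proof (D_ge KT w (sig (snd z)) n). unfold w in H0. rewrite Dsig in H0. fold w in H0.
    specialize (Hdn n Hn). simpl in H0. pose proof (hp_pos n).
    assert (Hlt : dT (w n) (sig (snd z) n) < Rmin (rho - Rabs (tv (w n) - 1 / 2)) (1 / 4)).
    { apply Rmult_lt_reg_r with ((/2)^n); auto. lra. }
    specialize (Hy2 n Hn). fold w in Hy2. unfold dT in Hlt.
    pose proof (tv_rng (w n)). pose proof (tv_rng (sig (snd z) n)).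
    revert Hlt Hy2 H2 H3. generalize (tv (w n)) (tv (sig (snd z) n)). intros a b.
    unfold dr, Rmin, Rabs; repeat (destruct Rle_dec || destruct Rcase_abs); intros; lra.
  -
    apply path_conn. intros a b [Ha1 Ha2] [Hb1 Hb2].
    set (wa := sig (snd a)) in *. set (wb := sig (snd b)) in *.
    set (lin := fun l : R => fun n => toT (tv (wa n) + l * (tv (wb n) - tv (wa n))) : KT).
    assert (Hlin : forall l n, 0 <= l <= 1 -> tv (lin l n) = tv (wa n) + l * (tv (wb n) - tv (wa n))).
    { intros l n Hl. apply tv_toT. pose proof (tv_rng (wa n)); pose proof (tv_rng (wb n)).
      replace (tv (wa n) + l * (tv (wb n) - tv (wa n))) with ((1 - l) * tv (wa n) + l * tv (wb n)) by ring.
      apply conv01; auto; apply tv_rng. }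
    assert (Hl0 : lin 0 = wa). { extensionality n. apply T_eq. rewrite Hlin by lra. ring. }
    assert (Hl1 : lin 1 = wb). { extensionality n. apply T_eq. rewrite Hlin by lra. ring. }
    exists (fun l => (u, tau (lin l))). split; [|split; [|split]].
    + rewrite Hl0. unfold wa. rewrite Hts. destruct a; simpl in *; subst; auto.
    + rewrite Hl1. unfold wb. rewrite Hts. destruct b; simpl in *; subst; auto.
    + intros l Hl. split; auto. simpl. rewrite Hst. intros n Hn. rewrite Hlin by auto.
      apply conv_abs; auto.
    + intros l m Hl Hm. rewrite dG_same_fst by reflexivity. simpl. rewrite Dtau.
      apply D_le. intros n. simpl. unfold dT. rewrite !Hlin by auto.
      pose proof (tv_rng (wa n)); pose proof (tv_rng (wb n)). pose proof (hp_pos n); pose proof (hp_le1 n).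
      assert (Hd : dr (tv (wa n) + l * (tv (wb n) - tv (wa n))) (tv (wa n) + m * (tv (wb n) - tv (wa n))) <= Rabs (l - m)).
      { eapply Rle_trans; [apply dr_le_abs|].
        replace (tv (wa n) + l * (tv (wb n) - tv (wa n)) - (tv (wa n) + m * (tv (wb n) - tv (wa n)))) with ((l - m) * (tv (wb n) - tv (wa n))) by ring.
        rewrite Rabs_mult. pose proof (Rabs_pos (l - m)).
        assert (Rabs (tv (wb n) - tv (wa n)) <= 1) by (unfold Rabs; destruct Rcase_abs; lra). nra. }
      assert (0 <= dr (tv (wa n) + l * (tv (wb n) - tv (wa n))) (tv (wa n) + m * (tv (wb n) - tv (wa n)))).
      { pose proof (Hlin l n Hl) as E1. pose proof (Hlin m n Hm) as E2. pose proof (dT_ge0 (lin l n) (lin m n)) as E3. unfold dT in E3.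
        rewrite E1, E2 in E3. auto. }
      nra.
  - assert (Hsc : sig t = c). { extensionality n. unfold sig, sadd, sopp; simpl.
      rewrite (taddC (t n)), taddN, tadd0. auto. }
    split; [reflexivity|]. simpl. fold t. rewrite Hsc. intros n Hn. unfold c. rewrite tv_toT by lra.
    rewrite Rminus_diag, Rabs_R0. auto.
  - intros y [Hy1 Hy2]. apply HUe.
    assert (Hsc : sig t = c). { extensionality n. unfold sig, sadd, sopp; simpl.
      rewrite (taddC (t n)), taddN, tadd0. auto. }
    rewrite dG_same_fst by (rewrite Hy1; auto). fold t. rewrite <- Dsig, Hsc.
    apply Rle_lt_trans with (r/2); [|pose proof (Rmin_r 1 e); fold r in H; lra].
    apply D_le. intros n. simpl. pose proof (dT_ge0 (c n) (sig (snd y) n)). pose proof (dT_le1 (c n) (sig (snd y) n)).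
    pose proof (hp_pos n); pose proof (hp_le1 n). destruct (Nat.lt_ge_cases n N).
    + specialize (Hy2 n H3). unfold dT in *. unfold c in *. rewrite tv_toT in * by lra.
      pose proof (dr_le_abs (1/2) (tv (sig (snd y) n))). rewrite Rabs_minus_sym in H4. nra.
    + pose proof (hp_mono N n H3). nra.
Qed.

Theorem corollary4p5 :
  (exists G : TopAbGroup,
      zero_dimensional G /\ locally_compact G /\ metrizable G /\
      (forall x : G, add x x = zero) /\ ~ g_reversible G) /\
  (exists G : TopAbGroup,
      locally_connected G /\ locally_compact G /\ metrizable G /\
      ~ g_reversible G).
Proof.
  split; [apply part1|].
  exists (GK KT). split; [apply KT_lconn|split; [apply GK_lc, KT_compact|split; [apply GK_metrizable|apply GK_not_rev]]].
Qed.
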